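(* Let $T$ be a string of length $n$ and $1<i\le j\le n$. For each $[s,t]\in\mathsf{MUS}(T[i-1..j])$ with $s\ne i-1$, if $[s,t]\notin\mathsf{MUS}(T[i..j])$ then $\#\mathit{occ}_{T[i-1..j]}(\mathit{sqp}_{i-1,j})=2$ and $\mathit{sqp}_{i-1,j}$ is a proper substring of $T[s..t]$.
   Context: $T[a..b]$ denotes the substring of $T$ from position $a$ to $b$. For strings $S,w$, $\#\mathit{occ}_S(w)$ is the number of positions at which $w$ occurs in $S$, with $\#\mathit{occ}_S(\varepsilon)=|S|+1$. A substring $w$ of $S$ is unique in $S$ if $\#\mathit{occ}_S(w)=1$ and repeating if $\#\mathit{occ}_S(w)\ge 2$. For $1\le i\le j\le n$, $\mathsf{MUS}(T[i..j])$ is the set of intervals $[s,t]$ (positions in $T$) with $i\le s\le t\le j$ such that $T[s..t]$ is unique in $T[i..j]$ and every proper substring of $T[s..t]$ (including the empty string) is repeating in $T[i..j]$. $\mathit{sqp}_{i,j}$ is the shortest (non-empty) prefix of $T[i..j]$ that occurs at most twice in $T[i..j]$. *)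

(* Defs.v *)
From mathcomp Require Import all_boot.
Set Implicit Arguments. Unset Strict Implicit. Unset Printing Implicit Defensive.

Section Strings.
Variable A : eqType.

(* T[a..b], with 1-based inclusive positions; empty if b < a. *)
Definition substr (T : seq A) (a b : nat) : seq A :=
  take (b.+1 - a) (drop a.-1 T).

(* #occ_S(w): number of positions p (0-based) at which w occurs in S.
   For w = [::] this is size S + 1. *)
Definition occ (S w : seq A) : nat :=
  count (fun p => take (size w) (drop p S) == w) (iota 0 (size S - size w).+1).

Definition unique_in (S w : seq A) : Prop := occ S w = 1.
Definition repeating_in (S w : seq A) : Prop := 2 <= occ S w.

Definition proper_substring (w x : seq A) : Prop := infix w x /\ w != x.

Definition in_MUS (T : seq A) (i j s t : nat) : Prop :=
  [/\ i <= s, s <= t, t <= j,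
      unique_in (substr T i j) (substr T s t) &
      forall w, proper_substring w (substr T s t) -> repeating_in (substr T i j) w].

(* sqp_{i,j}: shortest non-empty prefix of T[i..j] occurring at most twice in T[i..j]
   (it exists whenever i <= j, since T[i..j] itself occurs once). *)
Definition sqp_of (S : seq A) : seq A :=
  take (find (fun k => occ S (take k.+1 S) <= 2) (iota 0 (size S))).+1 S.

Definition sqp (T : seq A) (i j : nat) : seq A := sqp_of (substr T i j).

End Strings.

(* Main.v *)
Require Import Defs.
From mathcomp Require Import all_boot.
From mathcomp Require Import zify.
From Stdlib Require Import Classical.
Set Implicit Arguments. Unset Strict Implicit.

Section Aux.
Variable A : eqType.
Implicit Types S w u v T : seq A.

Lemma occE S w : occ S w =
  count (fun p => take (size w) (drop p S) == w) (iota 0 (size S).+1).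
Proof.
rewrite /occ.
have -> : (size S).+1 = (size S - size w).+1 + (size S - (size S - size w)) by lia.
rewrite iotaD count_cat.
set m := size S - size w.
rewrite [X in _ = _ + X](@eq_in_count _ _ pred0); first by rewrite count_pred0 addn0.
move=> p; rewrite mem_iota /= => /andP [h1 h2].
apply/negbTE/eqP => h; have := congr1 size h.
rewrite size_take_min size_drop; lia.
Qed.

Lemma occ_cons x S w : occ (x :: S) w = (take (size w) (x :: S) == w) + occ S w.
Proof.
rewrite [LHS]occE [occ S w]occE.
set n := (size S).+1.
have -> : (size (x :: S)).+1 = n.+1 by [].
have -> : iota 0 n.+1 = 0 :: iota 1 n by [].
rewrite (iotaDl 1 0) [count _ (_ :: _)]/= count_map; congr (_ + _).

Qed.

Lemma occ_nil S : occ S [::] = (size S).+1.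
Proof.
rewrite occE (@eq_count _ _ predT); first by rewrite count_predT size_iota.
by move=> p /=; rewrite take0.
Qed.

Lemma occ_prefix_mono S u v : prefix v u -> occ S u <= occ S v.
Proof.
move=> pvu; rewrite !occE; apply: sub_count => p /= /eqP h.
have hs := size_prefix pvu.
move: pvu; rewrite prefixE -h take_takel //.
Qed.

Lemma occ_pos S w : infix w S -> 0 < occ S w.
Proof.
move=> /infixP [s1 [s2 ->]]; rewrite occE -has_count; apply/hasP.
exists (size s1).
  by rewrite mem_iota !size_cat /=; lia.
by rewrite drop_size_cat // take_size_cat.
Qed.

Lemma infix_eq_size u w : infix u w -> size w <= size u -> u = w.
Proof.
move=> /infixP [s1 [s2 ->]]; rewrite !size_cat => h.
have e1 : size s1 = 0 by lia.
have e2 : size s2 = 0 by lia.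
by move/size0nil: e1 => ->; move/size0nil: e2 => ->; rewrite cats0.
Qed.

Lemma substr_cons T i j : 1 < i -> i <= j -> j <= size T ->
  exists c, substr T i.-1 j = c :: substr T i j.
Proof.
move=> h1 h2 h3; case: T h3 => [|x0 T'] h3; first by (simpl in h3; lia).
rewrite /substr (drop_nth x0); last by move: h3 => /=; lia.
have -> : j.+1 - i.-1 = (j.+1 - i).+1 by lia.
have -> : i.-2.+1 = i.-1 by lia.
by exists (nth x0 (x0 :: T') i.-2).
Qed.

Lemma substr_infix T i j s t : 0 < i -> i <= s -> s <= t -> t <= j ->
  infix (substr T s t) (substr T i j).
Proof.
move=> h0 h1 h2 h3; rewrite /substr.
set X := drop i.-1 T.
have -> : drop s.-1 T = drop (s - i) X by rewrite /X drop_drop; congr drop; lia.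
have -> : j.+1 - i = (s - i) + (j.+1 - s) by lia.
rewrite takeD; apply: infix_catl.
have -> : take (t.+1 - s) (drop (s - i) X) =
          take (t.+1 - s) (take (j.+1 - s) (drop (s - i) X)) by rewrite take_takel //; lia.
exact: infix_take.
Qed.

End Aux.

Theorem lemma18 (A : eqType) (T : seq A) (i j : nat) :
  1 < i -> i <= j -> j <= size T ->
  forall s t : nat,
    in_MUS T i.-1 j s t -> s <> i.-1 -> ~ in_MUS T i j s t ->
    occ (substr T i.-1 j) (sqp T i.-1 j) = 2 /\
    proper_substring (sqp T i.-1 j) (substr T s t).
Proof.
move=> h1 h2 h3 s t [hs hst htj huniq hmin] hsne hnot.
have his : i <= s by lia.
have [c hc] := @substr_cons A T i j h1 h2 h3.
set S := substr T i j in hc *.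
set w := substr T s t in huniq hmin hnot *.
have hwS : infix w S by apply: substr_infix => //; lia.
have huS : unique_in S w.
  move: huniq; rewrite /unique_in hc occ_cons.
  have := occ_pos hwS; lia.
have [u hu] : exists u, ~ (proper_substring u w -> repeating_in S u).
  apply: not_all_ex_not => H; apply: hnot; split => //.
have [hpu hnr] : proper_substring u w /\ ~ repeating_in S u.
  exact: imply_to_and.
have hr' := hmin _ hpu.
move: hr' hnr; rewrite /repeating_in hc occ_cons => hr' hnr.
have hb : (take (size u) (c :: S) == u) = true.
  by case: (take (size u) (c :: S) == u) hr' => //=; lia.
have hoS : occ S u = 1 by move: hr'; rewrite hb /=; lia.
have ho2 : occ (c :: S) u = 2 by rewrite occ_cons hb hoS.
case: hpu => hinf hneq.
have hun : u != [::].
  apply/eqP => e; move: ho2 hneq; rewrite e occ_nil /= => ho2 hneq.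
  have : 0 < size w by case: (w) hneq.
  have := size_infix hwS; lia.
have hsz0 : 0 < size u by case: (u) hun.
have hszw : size u <= size (c :: S).
  apply: (leq_trans (size_infix hinf)); apply: size_infix.
  by apply: (infix_trans hwS); rewrite -cat1s; apply: suffix_infix.
rewrite /sqp hc /sqp_of.
set P := (fun k => occ (c :: S) (take k.+1 (c :: S)) <= 2).
set k := find P (iota 0 (size (c :: S))).
have hPu : P (size u).-1.
  by rewrite /P prednK // (eqP hb) ho2.
have hkle : k <= (size u).-1.
  rewrite leqNgt; apply/negP => hlt.
  have := before_find 0 hlt; rewrite nth_iota; last by lia.
  by rewrite add0n hPu.
have hhas : has P (iota 0 (size (c :: S))).
  by apply/hasP; exists (size u).-1 => //; rewrite mem_iota; lia.
have hPk : P k.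
  have := nth_find 0 hhas; rewrite -/k nth_iota; first by rewrite add0n.
  by rewrite -(size_iota 0 (size (c :: S))) -has_find.
have hpre : prefix (take k.+1 (c :: S)) u.
  have hkX : k.+1 <= size (c :: S) by lia.
  rewrite prefixE size_take_min (minn_idPl hkX).
  move: (eqP hb) => hbu; rewrite -[in take k.+1 u]hbu take_takel //; lia.
split.
  apply/eqP; rewrite eqn_leq; apply/andP; split; first exact: hPk.
  rewrite -ho2; exact: occ_prefix_mono.
split.
  apply: (infix_trans _ hinf); move: hpre => /prefixP [r ->]; exact: prefix_infix.
apply/eqP => e.
have := size_prefix hpre; rewrite e => hle.
by move/eqP: hneq; apply; apply: infix_eq_size.
Qed.
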